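(* Let $i\ge 3$ and $k\ge 3$ be integers. Then: (a) $g_2(L_i,L_{i+2},L_{i+k})=(3L_i-1)L_{i+2}-L_i$ whenever $k\ge i+4$; (b) $g_2(L_i,L_{i+2},L_{2i+3})=(L_i-1)L_{i+2}+L_{2i+3}-L_i$; (c) $g_2(L_i,L_{i+2},L_{2i+2})=(L_i-1)L_{i+2}+L_{2i+2}-L_i$ if $i$ is odd, and $g_2(L_i,L_{i+2},L_{2i+2})=(2L_i-1)L_{i+2}-L_i$ if $i$ is even; (d) $g_2(L_i,L_{i+2},L_{2i+1})=(2F_{i-1}-1)L_{i+2}+2L_{2i+1}-L_i$; (e) $g_2(L_3,L_5,L_6)=L_5+3L_6-L_3=61$; (f) if $r=\lfloor (L_i-1)/F_k\rfloor\ge 2$ (which holds exactly when $k\le i$ and $(i,k)\ne(3,3)$), then $$g_2(L_i,L_{i+2},L_{i+k})=\begin{cases}(L_i-rF_k-1)L_{i+2}+(r+2)L_{i+k}-L_i & \text{if } (L_i-rF_k)L_{i+2}\ge F_{k-2}L_i,\\ (F_k-1)L_{i+2}+(r+1)L_{i+k}-L_i & \text{if } (L_i-rF_k)L_{i+2}< F_{k-2}L_i.\end{cases}$$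
   Context: Fibonacci numbers: $F_0=0$, $F_1=1$, $F_n=F_{n-1}+F_{n-2}$. Lucas numbers: $L_0=2$, $L_1=1$, $L_n=L_{n-1}+L_{n-2}$. For positive integers $a_1,\dots,a_l$ with $\gcd(a_1,\dots,a_l)=1$ and an integer $n$, let $d(n;a_1,\dots,a_l)$ be the number of tuples $(x_1,\dots,x_l)$ of nonnegative integers with $a_1x_1+\dots+a_lx_l=n$. For a nonnegative integer $p$, the $p$-Frobenius number $g_p(a_1,\dots,a_l)$ is the largest integer $n$ with $d(n;a_1,\dots,a_l)\le p$. *)

(* Defs.v *)
From mathcomp Require Import all_boot.
Set Implicit Arguments. Unset Strict Implicit. Unset Printing Implicit Defensive.

Fixpoint fib (n : nat) : nat :=
  match n with
  | 0 => 0
  | 1 => 1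
  | (m.+1 as p).+1 => fib p + fib m
  end.

Fixpoint lucas (n : nat) : nat :=
  match n with
  | 0 => 2
  | 1 => 1
  | (m.+1 as p).+1 => lucas p + lucas m
  end.

(* Since all a_j are positive, each x_j is
   at most n, so we may range each x_j over 'I_n.+1 = {0,...,n}. *)
Definition nsol (n : nat) (a : seq nat) : nat :=
  #|[set x : {ffun 'I_(size a) -> 'I_n.+1} | \sum_(j < size a) nth 0 a j * x j == n]|.

(* "g_p(a) = g": g is the largest integer n with d(n; a) <= p.
   (For negative n, d(n;a) = 0 <= p, so the largest such integer, when it is
   a nonnegative g, is characterized by d(g) <= p and d(m) > p for all m > g.) *)
Definition is_pFrobenius (p : nat) (a : seq nat) (g : nat) : Prop :=
  nsol g a <= p /\ forall m : nat, g < m -> p < nsol m a.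

(* Main.v *)
Require Import Defs.
From mathcomp Require Import all_boot zify.
Set Implicit Arguments. Unset Strict Implicit.

Lemma sum3 a b c n (f : {ffun 'I_3 -> 'I_n.+1}) :
 (\sum_(j < 3) nth 0 [:: a; b; c] j * f j) = a * f ord0 + b * f (inord 1) + c * f (inord 2).
Proof.
rewrite !big_ord_recl big_ord0 /= addn0 addnA.
have -> : (lift ord0 ord0 : 'I_3) = inord 1 by apply: val_inj; rewrite /= inordK.
have -> : (lift ord0 (lift ord0 ord0) : 'I_3) = inord 2 by apply: val_inj; rewrite /= inordK.
by [].
Qed.

Lemma ord3_cases (j : 'I_3) : j = ord0 \/ j = inord 1 \/ j = inord 2.
Proof.
case: j => [[|[|[|m]]] Hm].
- by left; apply: val_inj.
- by right; left; apply: val_inj; rewrite /= inordK.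
- by right; right; apply: val_inj; rewrite /= inordK.
- by [].
Qed.

Definition mkf n x y z : {ffun 'I_3 -> 'I_n.+1} :=
  [ffun j : 'I_3 => inord (nth 0 [:: x; y; z] j)].

Lemma mkf_eq n (f : {ffun 'I_3 -> 'I_n.+1}) x y z :
  val (f ord0) = x -> val (f (inord 1)) = y -> val (f (inord 2)) = z -> f = mkf n x y z.
Proof.
move=> H0 H1 H2; apply/ffunP => j; rewrite ffunE.
have i1 : nat_of_ord (inord 1 : 'I_3) = 1 by rewrite inordK.
have i2 : nat_of_ord (inord 2 : 'I_3) = 2 by rewrite inordK.
case: (ord3_cases j) => [->|[->|->]]; apply: val_inj; rewrite /= ?i1 ?i2 /= inordK //.
- by rewrite -H0 ltn_ord.
- by rewrite -H1 ltn_ord.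
- by rewrite -H2 ltn_ord.
Qed.

Lemma mkf_val n x y z : x <= n -> y <= n -> z <= n ->
  [/\ val (mkf n x y z ord0) = x, val (mkf n x y z (inord 1)) = y & val (mkf n x y z (inord 2)) = z].
Proof.
move=> hx hy hz; rewrite !ffunE /= !inordK //=.
Qed.

Lemma nsol_le2 a b c n y1 z1 y2 z2 : 0 < a ->
 (forall x y z, a*x + b*y + c*z = n -> (y = y1 /\ z = z1) \/ (y = y2 /\ z = z2)) ->
 nsol n [:: a; b; c] <= 2.
Proof.
move=> ha H; rewrite /nsol.
set S := [set _ | _].
apply: (@leq_trans #|[set mkf n ((n - b*y1 - c*z1) %/ a) y1 z1; mkf n ((n - b*y2 - c*z2) %/ a) y2 z2]|); last by rewrite cards2; case: (_ != _).
apply: subset_leq_card; apply/subsetP => f; rewrite inE /= sum3 => /eqP Hf.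
have Hx : f ord0 = (n - b * f (inord 1) - c * f (inord 2)) %/ a :> nat.
  have gen : forall x y z, a*x + b*y + c*z = n -> x = (n - b*y - c*z) %/ a.
    move=> x y z <-; have -> : a*x+b*y+c*z - b*y - c*z = x*a by lia.
    by rewrite mulnK.
  exact: gen Hf.
case: (H _ _ _ Hf) => [[E1 E2]|[E1 E2]]; rewrite !inE; apply/orP; [left|right];
  apply/eqP; apply: mkf_eq => /=; by rewrite ?Hx ?E1 ?E2.
Qed.

Lemma nsol_ge3 a b c n x1 y1 z1 x2 y2 z2 x3 y3 z3 : 0 < a -> 0 < b -> 0 < c ->
  a*x1 + b*y1 + c*z1 = n -> a*x2 + b*y2 + c*z2 = n -> a*x3 + b*y3 + c*z3 = n ->
  (y1, z1) <> (y2, z2) -> (y1, z1) <> (y3, z3) -> (y2, z2) <> (y3, z3) ->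
  2 < nsol n [:: a; b; c].
Proof.
move=> ha hb hc E1 E2 E3 D12 D13 D23; rewrite /nsol.
have bd : forall x y z, a*x + b*y + c*z = n -> [/\ x <= n, y <= n & z <= n].
  move=> x y z E; split; nia.
have [h1 h1' h1''] := bd _ _ _ E1.
have [h2 h2' h2''] := bd _ _ _ E2.
have [h3 h3' h3''] := bd _ _ _ E3.
have [v1 v1' v1''] := mkf_val h1 h1' h1''.
have [v2 v2' v2''] := mkf_val h2 h2' h2''.
have [v3 v3' v3''] := mkf_val h3 h3' h3''.
set f1 := mkf n x1 y1 z1 in v1 v1' v1''.
set f2 := mkf n x2 y2 z2 in v2 v2' v2''.
set f3 := mkf n x3 y3 z3 in v3 v3' v3''.
have ne : forall (f g : {ffun 'I_3 -> 'I_n.+1}), (val (f (inord 1)), val (f (inord 2))) <> (val (g (inord 1)), val (g (inord 2))) -> f != g.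
  by move=> f g Hne; apply/eqP => Efg; apply: Hne; rewrite Efg.
apply: (@leq_trans #|[set f1; f2; f3]|).
  rewrite -setUA cardsU1 cards2 in_set2 negb_or.
  rewrite (ne f1 f2) ?(ne f1 f3) ?(ne f2 f3) //; by rewrite ?v1' ?v1'' ?v2' ?v2'' ?v3' ?v3''.
apply: subset_leq_card; apply/subsetP => f; rewrite !inE -orbA => /or3P [] /eqP ->;
  rewrite sum3 ?v1 ?v1' ?v1'' ?v2 ?v2' ?v2'' ?v3 ?v3' ?v3'' ?E1 ?E2 ?E3 //.
Qed.

Lemma mod_cancel a b v u : coprime a b -> v * b = u * b %[mod a] -> v = u %[mod a].
Proof.
move=> co.
wlog le: v u / u <= v.
  move=> W; case: (leqP u v) => h; first exact: W.
  by move=> E; apply/esym/W; [exact: ltnW|].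
move/eqP; rewrite eqn_mod_dvd ?leq_mul2r ?le ?orbT // -mulnBl Gauss_dvdl //.
by rewrite -eqn_mod_dvd // => /eqP.
Qed.

Lemma exists_class a b m : 0 < a -> coprime a b -> exists u, u < a /\ (u * b) %% a = m %% a.
Proof.
move=> ha co; have [e _ He] := Bezoutl b ha.
rewrite (eqP co) in He; case/dvdnP: He => q Hq.
exists ((m * e * (a - 1)) %% a); split; first by rewrite ltn_mod.
rewrite modnMml.
have E : m * e * (a - 1) * b + m * a = m * q * (a - 1) * a + m.
  have Eb : e * b + 1 = q * a by lia.
  have q1 : 1 <= q by nia.
  destruct a as [|a']; first by [].
  rewrite subn1 /=. nia.
have := congr1 (modn^~ a) E; rewrite /= [in LHS]addnC !modnMDl.
by [].
Qed.

Lemma le_of_mod a w m : w %% a = m %% a -> w < m + a -> w <= m.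
Proof.
move=> E lt; rewrite leqNgt; apply/negP => mw.
have : a %| w - m by rewrite -eqn_mod_dvd ?(ltnW mw) // E.
move/dvdn_leq; rewrite subn_gt0 => /(_ mw); lia.
Qed.

Lemma colid a b c s t y z : c + s*a = t*b -> (y + z*t)*b = b*y + c*z + z*s*a.
Proof. move=> H; have : z*(c + s*a) = z*(t*b) by rewrite H. nia. Qed.

Lemma point_sol a b c s t G m u y z : 0 < a -> c + s*a = t*b ->
  (y + z*t) %% a = u -> (u*b) %% a = m %% a -> b*y + c*z <= G -> G < m + a ->
  exists x, a*x + b*y + c*z = m.
Proof.
move=> ha H E1 E2 hG hm.
set w := b*y + c*z.
have Ew : w %% a = m %% a.
  have := congr1 (modn^~ a) (colid y z H); rewrite /= -/w.
  rewrite [in RHS]addnC modnMDl => <-.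
  by rewrite -modnMml E1.
have wm : w <= m by apply: (le_of_mod Ew); clear -hG hm; lia.
have : a %| m - w by rewrite -eqn_mod_dvd // Ew.
case/dvdnP => x Hx; exists x; rewrite -/w; clear -Hx wm; lia.
Qed.

Lemma frame a b c s t g u0 y1 z1 y2 z2 :
 0 < a -> 0 < b -> 0 < c -> coprime a b -> c + s*a = t*b -> u0 < a ->
 g %% a = (u0 * b) %% a ->
 (forall y z, (y + z*t) %% a = u0 -> b*y + c*z <= g -> (y = y1 /\ z = z1) \/ (y = y2 /\ z = z2)) ->
 (forall u, u < a -> exists y1 z1 y2 z2 y3 z3,
     [/\ (y1 + z1*t) %% a = u, (y2 + z2*t) %% a = u, (y3 + z3*t) %% a = u &
      [/\ b*y1 + c*z1 <= g + a, b*y2 + c*z2 <= g + a, b*y3 + c*z3 <= g + a &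
      [/\ (y1,z1) <> (y2,z2), (y1,z1) <> (y3,z3) & (y2,z2) <> (y3,z3)]]]) ->
 is_pFrobenius 2 [:: a; b; c] g.
Proof.
move=> ha hb hc co H hu0 HG Up Low; split.
- apply: (nsol_le2 (y1 := y1) (z1 := z1) (y2 := y2) (z2 := z2) ha) => x y z E.
  apply: Up; last by clear -E; lia.
  have E1 : (y + z*t) * b = u0 * b %[mod a].
    have E2 : (y + z*t) * b + a*x = g + z*s*a by rewrite (colid y z H); clear -E; lia.
    have := congr1 (modn^~ a) E2; rewrite /= -HG [in RHS]addnC modnMDl.
    by rewrite [in LHS]addnC mulnC modnMDl.
  by rewrite (mod_cancel co E1) modn_small.
- move=> m hm.
  have [u [hu Eu]] := exists_class m ha co.
  have [yy1 [zz1 [yy2 [zz2 [yy3 [zz3 [[e1 e2 e3] [l1 l2 l3] [d12 d13 d23]]]]]]]] := Low u hu.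
  have hmG : g + a < m + a by clear -hm; lia.
  have [x1 X1] := point_sol ha H e1 Eu l1 hmG.
  have [x2 X2] := point_sol ha H e2 Eu l2 hmG.
  have [x3 X3] := point_sol ha H e3 Eu l3 hmG.
  exact: (nsol_ge3 ha hb hc X1 X2 X3 d12 d13 d23).
Qed.

Lemma modeq a g u0 b K M : g + K*a = u0*b + M*a -> g %% a = (u0*b) %% a.
Proof.
move=> E; have := congr1 (modn^~ a) E; rewrite /= addnC modnMDl => ->.
by rewrite addnC modnMDl.
Qed.

Lemma wid a b c s t v z : c + s*a = t*b -> z*t <= v -> b*(v - z*t) + c*z + z*s*a = v*b.
Proof.
move=> H hz; have : z*(c + s*a) = z*(t*b) by rewrite H.
rewrite mulnBr; nia.
Qed.

Lemma vc_le a b c s t n y z : c + s*a = t*b -> b*y + c*z <= n -> (y + z*t)*c <= t*n.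
Proof.
move=> H hn; have hc : c <= t*b by lia.
have h1 : y*c <= y*(t*b) by rewrite leq_mul2l hc orbT.
have h2 : t*(b*y + c*z) <= t*n by rewrite leq_mul2l hn orbT.
nia.
Qed.

Lemma z_le z t v Q : z*t <= v -> v < Q.+1*t -> z <= Q.
Proof. move=> h1 h2; have : z*t < Q.+1*t by lia. by rewrite ltn_mul2r => /andP[_]. Qed.

Lemma pt_mod a u j y z t : u < a -> z*t <= u + j*a -> y = u + j*a - z*t -> (y + z*t) %% a = u.
Proof. move=> hu hz ->; rewrite subnK // addnC modnMDl modn_small //. Qed.

Lemma vdecomp a v u : v %% a = u -> exists j, v = j * a + u.
Proof. by move=> <-; exists (v %/ a); rewrite -divn_eq. Qed.

Lemma mkpt a b c s t G u j z : c + s*a = t*b -> u < a -> z*t <= u + j*a ->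
  (u + j*a)*b <= G + z*s*a ->
  ((u + j*a - z*t) + z*t) %% a = u /\ b*(u + j*a - z*t) + c*z <= G.
Proof.
move=> H hu hz hb; split; first exact: (pt_mod (j:=j)).
have := wid H hz; lia.
Qed.

Ltac distinct := let E := fresh in move=> E; case: E => *; lia.
Ltac low3 u a t j1 z1 j2 z2 j3 z3 :=
  exists (u + j1*a - z1*t), z1, (u + j2*a - z2*t), z2, (u + j3*a - z3*t), z3.
Ltac fin3 := match goal with
  | m1 : _, m2 : _, m3 : _, b1 : _, b2 : _, b3 : _ |- _ => fail end.

Lemma fibSS n : fib n.+2 = fib n.+1 + fib n. Proof. by []. Qed.
Lemma lucSS n : lucas n.+2 = lucas n.+1 + lucas n. Proof. by []. Qed.

Lemma luc_fib n : lucas n.+1 = fib n + fib n.+2.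
Proof.
elim: n {-2}n (leqnn n) => [|m IH] n hn.
  by case: n hn.
case: n hn => [|[|n]] hn //.
rewrite lucSS !IH //; last lia.
rewrite !fibSS; lia.
Qed.

Lemma fib_leS n : fib n <= fib n.+1.
Proof. case: n => // n; rewrite fibSS; lia. Qed.

Lemma fib_mono m n : m <= n -> fib m <= fib n.
Proof.
move=> h; rewrite -(subnK h); elim: (n - m) => [|d IH] //.
rewrite addSn; exact: leq_trans IH (fib_leS _).
Qed.

Lemma fib_pos n : 0 < fib n.+1.
Proof. elim: n => [|n IH] //; rewrite fibSS; lia. Qed.

Lemma key_id i k : lucas (i + k.+2) + fib k * lucas i = fib k.+2 * lucas (i + 2).
Proof.
elim: k {-2}k (leqnn k) => [|m IH] k hk.
  case: k hk => // _; rewrite addn2 /= ; lia.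
case: k hk => [|[|k]] hk.
- rewrite addn2 /=; lia.
- rewrite /= !addnS !addn0 !lucSS; lia.
- have h1 := IH k ltac:(lia); have h2 := IH k.+1 ltac:(lia).
  have e1 : fib k.+4 = fib k.+3 + fib k.+2 := fibSS _.
  have e2 : fib k.+2 * lucas i = fib k.+1 * lucas i + fib k * lucas i by rewrite fibSS mulnDl.
  have e3 : lucas (i + k.+4) = lucas (i + k.+3) + lucas (i + k.+2) by rewrite !addnS lucSS.
  rewrite e3 e1 e2 mulnDl; lia.
Qed.

Lemma luc_coprime1 n : coprime (lucas n) (lucas n.+1).
Proof.
elim: n => [|n IH] //.
rewrite /coprime lucSS gcdnDl gcdnC; exact: IH.
Qed.

Lemma luc_coprime i : coprime (lucas i) (lucas (i + 2)).
Proof.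
rewrite addn2 /coprime lucSS gcdnDr; exact: luc_coprime1.
Qed.

Lemma cassini n : if odd n then fib n.+1 * fib n.+1 + 1 = fib n.+1 * fib n + fib n * fib n
                  else fib n.+1 * fib n.+1 = fib n.+1 * fib n + fib n * fib n + 1.
Proof.
elim: n => [|n IH] //.
rewrite fibSS.
case h: (odd n) IH => IH.
- have -> : odd n.+1 = false by rewrite /= h.
  nia.
- have -> : odd n.+1 = true by rewrite /= h.
  nia.
Qed.

Lemma caseA a b c s t : 0 < a -> 0 < b -> 0 < c -> coprime a b -> c + s*a = t*b ->
  0 < s -> 5*s*a <= t*b -> 3*a <= t ->
  is_pFrobenius 2 [:: a; b; c] ((3*a-1)*b - a).
Proof.
move=> ha hb hc co H hs hts h3.
have [g Eg] : exists g, g = (3*a-1)*b - a by eexists.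
have Eg' : g + a + b = 3*a*b by rewrite Eg mulnBl; clear -ha hb; nia.
rewrite -Eg; clear Eg.
apply: (frame (s:=s) (t:=t) (u0 := a-1) (y1:=a-1) (z1:=0) (y2:=2*a-1) (z2:=0)) => //.
- lia.
- apply: (modeq (K:=1) (M:=2*b)); rewrite mulnBl; clear -Eg' ha hb; nia.
- move=> y z hm hle.
  have [j hv] := vdecomp hm; have vc := vc_le H hle; clear hm.
  have hcol := colid y z H.
  move: hv vc hcol; set v := y + z*t => hv vc hcol.
  have hv' : v + 1 = j*a + a by clear -hv ha; lia.
  clear hv.
  have hzv : z*t <= v by rewrite /v; lia.
  have [j3|] := leqP 3 j.
    have hv4 : 4*a <= v + 1 by rewrite hv'; clear -j3; nia.
    have h1 : (4*a)*c <= (v+1)*c by rewrite leq_mul2r hv4 orbT.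
    have h2 : t*(g + a + b) = t*(3*a*b) by rewrite Eg'.
    have h3' := leq_mul (leqnn a) hts.
    have h4 : 4*a*(c + s*a) = 4*a*(t*b) by rewrite H.
    clear -h1 h2 h3' h4 vc hs ha H; nia.
  rewrite ltnS leq_eqVlt => /orP [/eqP j2|]; last rewrite ltnS leq_eqVlt => /orP [/eqP j1|j0].
  + have z0 : z <= 0 by apply: (z_le hzv); clear -hv' j2 h3; nia.
    have zz : z = 0 by lia.
    subst z j; rewrite /v in hv'; clear -hv' hle Eg' ha hb; nia.
  + have z0 : z <= 0 by apply: (z_le hzv); clear -hv' j1 h3; nia.
    have zz : z = 0 by lia.
    subst z j; rewrite /v in hv'; right; clear -hv' ha; nia.
  + have jz : j = 0 by lia.
    have z0 : z <= 0 by apply: (z_le hzv); clear -hv' jz h3; nia.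
    have zz : z = 0 by lia.
    subst z j; rewrite /v in hv'; left; clear -hv' ha; nia.
- move=> u hu.
  low3 u a t 0 0 1 0 2 0.
  have [m1 b1] := mkpt (G := g + a) (j:=0) (z:=0) H hu ltac:(lia) ltac:(clear -hu Eg'; nia).
  have [m2 b2] := mkpt (G := g + a) (j:=1) (z:=0) H hu ltac:(lia) ltac:(clear -hu Eg'; nia).
  have [m3 b3] := mkpt (G := g + a) (j:=2) (z:=0) H hu ltac:(lia) ltac:(clear -hu Eg'; nia).
  split; [exact m1|exact m2|exact m3|split; [exact b1|exact b2|exact b3|split; distinct]].
Qed.

Ltac fin := split; [assumption|assumption|assumption|split; [assumption|assumption|assumption|split; distinct]].

Lemma caseBC1 a b c s t : 0 < a -> 0 < b -> 0 < c -> coprime a b -> c + s*a = t*b ->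
  0 < s -> 5*s*a <= t*b -> a < t -> t <= 2*a -> s*a <= (t-a)*b ->
  is_pFrobenius 2 [:: a; b; c] ((a+t-1)*b - s*a - a).
Proof.
move=> ha hb hc co H hs hts h1 h2 hG.
have hG' : s*a + a*b <= t*b by move: hG; rewrite mulnBl; clear -h1 hb; nia.
clear hG.
have [g Eg] : exists g, g = (a+t-1)*b - s*a - a by eexists.
have Eg' : g + a + s*a + b = a*b + t*b by rewrite Eg !mulnBl !mulnDl; clear -ha hb h1 hG'; nia.
rewrite -Eg; clear Eg.
have [d hd] : exists d, d + a + 1 = t by exists (t - a - 1); lia.
apply: (frame (s:=s) (t:=t) (u0 := d) (y1:=d) (z1:=0) (y2:=t-1) (z2:=0)) => //.
- lia.
- apply: (modeq (K:=s+1) (M:=2*b)); rewrite -hd in Eg'; clear -Eg'; nia.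
- move=> y z hm hle.
  have [j hv] := vdecomp hm; have vc := vc_le H hle; clear hm.
  have hcol := colid y z H.
  move: hv vc hcol; set v := y + z*t => hv vc hcol.
  have hzv : z*t <= v by rewrite /v; lia.
  have [j3|] := leqP 3 j.
    have hv4 : t + 2*a <= v + 1 by rewrite hv -hd; clear -j3; nia.
    have h1' : (t + 2*a)*c <= (v+1)*c by rewrite leq_mul2r hv4 orbT.
    have h2' : t*(g + a + s*a + b) = t*(a*b + t*b) by rewrite Eg'.
    have h3' := leq_mul (leqnn a) hts.
    have h4 : (t + 2*a)*(c + s*a) = (t + 2*a)*(t*b) by rewrite H.
    clear -h1' h2' h3' h4 vc hs ha H; nia.
  rewrite ltnS leq_eqVlt => /orP [/eqP j2|]; last rewrite ltnS leq_eqVlt => /orP [/eqP j1|j0].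
  + have z0 : z <= 1 by apply: (z_le hzv); rewrite hv j2 -hd; clear -h1; nia.
    have hz' : z*(s*a) <= 1*(s*a) by rewrite leq_mul2r z0 orbT.
    have htb : t*b = d*b + a*b + b by rewrite -hd !mulnDl mul1n.
    rewrite hv j2 in hcol; clear -hcol hle hz' Eg' htb ha; nia.
  + have z0 : z <= 0 by apply: (z_le hzv); rewrite hv j1 -hd; clear; nia.
    have zz : z = 0 by lia.
    subst z j; rewrite /v in hv; right; clear -hv hd; nia.
  + have jz : j = 0 by lia.
    have z0 : z <= 0 by apply: (z_le hzv); rewrite hv jz -hd; clear; nia.
    have zz : z = 0 by lia.
    subst z j; rewrite /v in hv; left; clear -hv; nia.
- move=> u hu.
  have hsa : s*a <= a*b.
    have tb2 : t*b <= (2*a)*b by rewrite leq_mul2r; apply/orP; right; lia.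
    clear -hG' tb2; nia.
  have [ut|ut] := leqP t (u + a).
  + low3 u a t 0 0 1 0 1 1.
    have [m1 b1] := mkpt (G := g + a) (j:=0) (z:=0) H hu ltac:(lia) ltac:(clear -hu Eg' hG' hsa; nia).
    have [m2 b2] := mkpt (G := g + a) (j:=1) (z:=0) H hu ltac:(lia) ltac:(clear -hu Eg' hG' hsa; nia).
    have [m3 b3] := mkpt (G := g + a) (j:=1) (z:=1) H hu ltac:(lia) ltac:(clear -hu Eg' hG' hsa; nia).
    fin.
  + low3 u a t 0 0 1 0 2 1.
    have [m1 b1] := mkpt (G := g + a) (j:=0) (z:=0) H hu ltac:(lia) ltac:(clear -hu ut Eg' hG' hsa; nia).
    have [m2 b2] := mkpt (G := g + a) (j:=1) (z:=0) H hu ltac:(lia) ltac:(clear -hu ut Eg' hG' hsa; nia).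
    have [m3 b3] := mkpt (G := g + a) (j:=2) (z:=1) H hu ltac:(lia) ltac:(clear -hu ut Eg' hG' hsa; nia).
    fin.
Qed.

Lemma caseBC2 a b c s t : 0 < a -> 0 < b -> 0 < c -> coprime a b -> c + s*a = t*b ->
  0 < s -> 5*s*a <= t*b -> a < t -> t < 2*a -> (t-a)*b <= s*a ->
  is_pFrobenius 2 [:: a; b; c] ((2*a-1)*b - a).
Proof.
move=> ha hb hc co H hs hts h1 h2 hG.
have hG' : t*b <= s*a + a*b by move: hG; rewrite mulnBl; clear -h1 hb; nia.
clear hG.
have [g Eg] : exists g, g = (2*a-1)*b - a by eexists.
have Eg' : g + a + b = 2*a*b by rewrite Eg !mulnBl; clear -ha hb; nia.
rewrite -Eg; clear Eg.
have [a1 ha1] : exists a1, a1 + 1 = a by exists (a - 1); lia.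
have [e he] : exists e, e + t + 1 = 2*a by exists (2*a - 1 - t); lia.
apply: (frame (s:=s) (t:=t) (u0 := a1) (y1:=a1) (z1:=0) (y2:=e) (z2:=1)) => //.
- lia.
- apply: (modeq (K:=1) (M:=b)); rewrite -ha1 in Eg' *; clear -Eg'; nia.
- move=> y z hm hle.
  have [j hv] := vdecomp hm; have vc := vc_le H hle; clear hm.
  have hcol := colid y z H.
  move: hv vc hcol; set v := y + z*t => hv vc hcol.
  have hzv : z*t <= v by rewrite /v; lia.
  have [j3|] := leqP 2 j.
    have hv4 : 3*a <= v + 1 by rewrite hv -ha1; clear -j3; nia.
    have h1' : (3*a)*c <= (v+1)*c by rewrite leq_mul2r hv4 orbT.
    have h2' : t*(g + a + b) = t*(2*a*b) by rewrite Eg'.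
    have h3' := leq_mul (leqnn a) hts.
    have h4 : (3*a)*(c + s*a) = (3*a)*(t*b) by rewrite H.
    clear -h1' h2' h3' h4 vc hs ha H; nia.
  rewrite ltnS leq_eqVlt => /orP [/eqP j1|j0].
  + have z0 : z <= 1 by apply: (z_le hzv); rewrite hv j1; clear -h1 ha1; nia.
    have [zz|zz] : z = 0 \/ z = 1 by lia.
    * subst z j; rewrite /v in hv; have hy : y = a1 + 1 + a1 by lia.
      subst y a; clear -hle Eg' hb; nia.
    * subst z j; rewrite /v in hv; right; clear -hv ha1 he; nia.
  + have jz : j = 0 by lia.
    have z0 : z <= 0 by apply: (z_le hzv); rewrite hv jz; clear -h1 ha1; nia.
    have zz : z = 0 by lia.
    subst z j; rewrite /v in hv; left; clear -hv; nia.
- move=> u hu.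
  have [ut|ut] := leqP t (u + a).
  + low3 u a t 0 0 1 0 1 1.
    have [m1 b1] := mkpt (G := g + a) (j:=0) (z:=0) H hu ltac:(lia) ltac:(clear -hu Eg' hG'; nia).
    have [m2 b2] := mkpt (G := g + a) (j:=1) (z:=0) H hu ltac:(lia) ltac:(clear -hu Eg' hG'; nia).
    have [m3 b3] := mkpt (G := g + a) (j:=1) (z:=1) H hu ltac:(lia) ltac:(clear -hu Eg' hG'; nia).
    fin.
  + have hu2 : u + 2*a <= t + a - 1 by lia.
    have hu2' : (u + 2*a)*b <= (t + a - 1)*b by rewrite leq_mul2r hu2 orbT.
    low3 u a t 0 0 1 0 2 1.
    have [m1 b1] := mkpt (G := g + a) (j:=0) (z:=0) H hu ltac:(lia) ltac:(clear -hu Eg' hG'; nia).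
    have [m2 b2] := mkpt (G := g + a) (j:=1) (z:=0) H hu ltac:(lia) ltac:(clear -hu Eg' hG'; nia).
    have [m3 b3] := mkpt (G := g + a) (j:=2) (z:=1) H hu ltac:(lia) ltac:(rewrite mulnBl mulnDl in hu2'; clear -hu2' h1 Eg' hG'; nia).
    fin.
Qed.

Lemma caseD a b c s t : 0 < a -> 0 < b -> 0 < c -> coprime a b -> c + s*a = t*b ->
  0 < s -> 5*s*a <= t*b -> t < a -> 2*a < 3*t -> s*a <= (a-t)*b ->
  is_pFrobenius 2 [:: a; b; c] ((2*a-1)*b - 2*s*a - a).
Proof.
move=> ha hb hc co H hs hts h1 h2 hG.
have hG' : s*a + t*b <= a*b by move: hG; rewrite mulnBl; clear -h1 hb; nia.
clear hG.
have hat : a*b <= 2*t*b by rewrite leq_mul2r; apply/orP; right; lia.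
have [g Eg] : exists g, g = (2*a-1)*b - 2*s*a - a by eexists.
have Eg' : g + a + 2*s*a + b = 2*a*b.
  have q1 : b <= t*b by rewrite leq_pmull //; lia.
  have q2 : a <= s*a by rewrite leq_pmull.
  rewrite Eg !mulnBl; clear -ha hb hG' hat q1 q2 hts; nia.
rewrite -Eg; clear Eg.
have [a1 ha1] : exists a1, a1 + 1 = a by exists (a - 1); lia.
have [e he] : exists e, e + t + 1 = a by exists (a - 1 - t); lia.
apply: (frame (s:=s) (t:=t) (u0 := a1) (y1:=a1) (z1:=0) (y2:=e) (z2:=1)) => //.
- lia.
- apply: (modeq (K:=1 + 2*s) (M:=b)); rewrite -ha1 in Eg' *; clear -Eg'; nia.
- move=> y z hm hle.
  have [j hv] := vdecomp hm; have vc := vc_le H hle; clear hm.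
  have hcol := colid y z H.
  move: hv vc hcol; set v := y + z*t => hv vc hcol.
  have hzv : z*t <= v by rewrite /v; lia.
  have [j3|] := leqP 2 j.
    have hv4 : 3*a <= v + 1 by rewrite hv -ha1; clear -j3; nia.
    have h1' : (3*a)*c <= (v+1)*c by rewrite leq_mul2r hv4 orbT.
    have h2' : t*(g + a + 2*s*a + b) = t*(2*a*b) by rewrite Eg'.
    have h3' := leq_mul (leqnn a) hts.
    have h4 : (3*a)*(c + s*a) = (3*a)*(t*b) by rewrite H.
    clear -h1' h2' h3' h4 vc hs ha H; nia.
  rewrite ltnS leq_eqVlt => /orP [/eqP j1|j0].
  + have z0 : z <= 2 by apply: (z_le hzv); rewrite hv j1; clear -h2 ha1; nia.
    have hz' : z*(s*a) <= 2*(s*a) by rewrite leq_mul2r z0 orbT.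
    rewrite hv j1 in hcol; clear -hcol hle hz' Eg' ha1 ha; nia.
  + have jz : j = 0 by lia.
    have z0 : z <= 1 by apply: (z_le hzv); rewrite hv jz; clear -h1 h2 ha1; nia.
    have [zz|zz] : z = 0 \/ z = 1 by lia.
    * subst z j; rewrite /v in hv; left; clear -hv; nia.
    * subst z j; rewrite /v in hv; right; clear -hv he ha1; nia.
- move=> u hu.
  have [ut|ut] := leqP t u.
  + low3 u a t 0 0 0 1 1 2.
    have [m1 b1] := mkpt (G := g + a) (j:=0) (z:=0) H hu ltac:(lia) ltac:(clear -hu Eg' hG' hat; nia).
    have [m2 b2] := mkpt (G := g + a) (j:=0) (z:=1) H hu ltac:(lia) ltac:(clear -hu Eg' hG' hat; nia).
    have [m3 b3] := mkpt (G := g + a) (j:=1) (z:=2) H hu ltac:(lia) ltac:(clear -hu Eg' hG' hat; nia).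
    fin.
  have [ut2|ut2] := leqP (2*t) (u + a).
  + have hu2 : (u + a)*b <= (a + t - 1)*b by rewrite leq_mul2r; apply/orP; right; lia.
    rewrite mulnBl mulnDl in hu2.
    low3 u a t 0 0 1 1 1 2.
    have [m1 b1] := mkpt (G := g + a) (j:=0) (z:=0) H hu ltac:(lia) ltac:(clear -hu Eg' hG' hat; nia).
    have [m2 b2] := mkpt (G := g + a) (j:=1) (z:=1) H hu ltac:(lia) ltac:(clear -hu2 h1 hb Eg' hG' hat; nia).
    have [m3 b3] := mkpt (G := g + a) (j:=1) (z:=2) H hu ltac:(lia) ltac:(clear -hu2 h1 hb Eg' hG' hat; nia).
    fin.
  + have hu2 : (u + a)*b <= (2*t - 1)*b by rewrite leq_mul2r; apply/orP; right; lia.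
    rewrite mulnBl in hu2.
    low3 u a t 0 0 1 0 1 1.
    have [m1 b1] := mkpt (G := g + a) (j:=0) (z:=0) H hu ltac:(lia) ltac:(clear -hu Eg' hG' hat; nia).
    have [m2 b2] := mkpt (G := g + a) (j:=1) (z:=0) H hu ltac:(lia) ltac:(clear -hu2 h1 hb Eg' hG' hat; nia).
    have [m3 b3] := mkpt (G := g + a) (j:=1) (z:=1) H hu ltac:(lia) ltac:(clear -hu2 h1 hb Eg' hG' hat; nia).
    fin.
Qed.


Lemma divfacts u t : 0 < t -> exists q, q*t <= u /\ u < q.+1*t.
Proof. move=> ht; exists (u %/ t); split; [exact: leq_divM|exact: ltn_ceil]. Qed.

Lemma lowF a b c s t r G : 0 < a -> 0 < b -> c + s*a = t*b -> 0 < s -> 5*s*a <= t*b ->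
  r*t + 1 <= a -> a <= (r+1)*t -> 2 <= r ->
  a*b + 2*t*b <= G + (r+2)*s*a + b -> (r+2)*t*b <= G + (r+1)*s*a + b ->
  forall u, u < a -> exists y1 z1 y2 z2 y3 z3,
     [/\ (y1 + z1*t) %% a = u, (y2 + z2*t) %% a = u, (y3 + z3*t) %% a = u &
      [/\ b*y1 + c*z1 <= G, b*y2 + c*z2 <= G, b*y3 + c*z3 <= G &
      [/\ (y1,z1) <> (y2,z2), (y1,z1) <> (y3,z3) & (y2,z2) <> (y3,z3)]]].
Proof.
move=> ha hb H hs hts hr1 hr2 hr G1 G2 u hu.
have ht : 0 < t.
  rewrite lt0n; apply/negP => /eqP t0; move: hts; rewrite t0 mul0n; clear -hs ha; nia.
have h2sa : 2*s*a <= t*b by lia.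
have hrsa : r*(5*s*a) <= r*(t*b) by rewrite leq_mul2l hts orbT.
have [ut2|ut2] := leqP (2*t) u.
- have [q [hq1 hq2]] := divfacts u ht.
  have q2 : 2 <= q.
    have : 2*t < q.+1*t by lia.
    by rewrite ltn_mul2r => /andP[_]; lia.
  have qr : q <= r.
    have : q*t < r.+1*t by rewrite mulSn; lia.
    by rewrite ltn_mul2r => /andP[_]; lia.
  have [d hd] : exists d, q + d = r by exists (r - q); lia.
  have [q' hq'] : exists q', q = q' + 2 by exists (q - 2); lia.
  subst q r.
  have hub : u*b <= (q'+3)*t*b - b.
    have : u.+1*b <= (q'+2).+1*t*b by rewrite leq_mul2r; apply/orP; right.
    rewrite mulSn; lia.
  have hd5 : (d+1)*(5*s*a) <= (d+1)*(t*b) by rewrite leq_mul2l hts orbT.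
  have hab : (q'+2+d)*t*b + b <= a*b.
    have : ((q'+2+d)*t + 1)*b <= a*b by rewrite leq_mul2r; apply/orP; right; lia.
    by rewrite mulnDl mul1n.
  low3 u a t 0 (q'+2) 0 (q'+1) 0 q'.
  have [m1 b1] := mkpt (G := G) (j:=0) (z:=q'+2) H hu ltac:(lia) ltac:(clear -hub hd5 hab G1 hs ha; nia).
  have [m2 b2] := mkpt (G := G) (j:=0) (z:=q'+1) H hu ltac:(lia) ltac:(clear -hub hd5 hab G1 hs ha; nia).
  have [m3 b3] := mkpt (G := G) (j:=0) (z:=q') H hu ltac:(lia) ltac:(clear -hub hd5 hab G1 hs ha; nia).
  fin.
have [q [hq1 hq2]] := divfacts (u + a) ht.
have [ut|ut] := leqP t u.
- have qlo : r + 1 <= q.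
    have : r.+1*t < q.+1*t by rewrite mulSn; lia.
    by rewrite ltn_mul2r => /andP[_]; lia.
  have qhi : q <= r + 2.
    have : q*t < (r+3)*t by rewrite !mulnDl; rewrite mulnDl in hr2; lia.
    by rewrite ltn_mul2r => /andP[_]; lia.
  have hub : u*b <= 2*t*b - b.
    have : u.+1*b <= (2*t)*b by rewrite leq_mul2r; apply/orP; right; lia.
    rewrite mulSn; lia.
  have [Q2|Q1] : q = r + 2 \/ q = r + 1 by lia.
  + have hua : (u + a)*b <= a*b + 2*t*b - b.
      have : (u + a).+1*b <= (a + 2*t)*b by rewrite leq_mul2r; apply/orP; right; lia.
      rewrite mulSn mulnDl; lia.
    low3 u a t 0 0 0 1 1 q.
    have [m1 b1] := mkpt (G := G) (j:=0) (z:=0) H hu ltac:(lia) ltac:(clear -hub hrsa hts G2 hs ha hr; nia).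
    have [m2 b2] := mkpt (G := G) (j:=0) (z:=1) H hu ltac:(lia) ltac:(clear -hub hrsa hts G2 hs ha hr; nia).
    have [m3 b3] := mkpt (G := G) (j:=1) (z:=q) H hu ltac:(lia) ltac:(clear -hua G1 Q2; nia).
    fin.
  + have hua : (u + a)*b <= (r+2)*t*b - b.
      have : (u + a).+1*b <= ((r+2)*t)*b by rewrite leq_mul2r; apply/orP; right; rewrite Q1 in hq2; lia.
      rewrite mulSn; lia.
    low3 u a t 0 0 0 1 1 q.
    have [m1 b1] := mkpt (G := G) (j:=0) (z:=0) H hu ltac:(lia) ltac:(clear -hub hrsa hts G2 hs ha hr; nia).
    have [m2 b2] := mkpt (G := G) (j:=0) (z:=1) H hu ltac:(lia) ltac:(clear -hub hrsa hts G2 hs ha hr; nia).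
    have [m3 b3] := mkpt (G := G) (j:=1) (z:=q) H hu ltac:(lia) ltac:(clear -hua G2 Q1; nia).
    fin.
- have qlo : r <= q.
    have : r*t < q.+1*t by lia.
    by rewrite ltn_mul2r => /andP[_]; lia.
  have qhi : q <= r + 1.
    have : q*t < (r+2)*t by rewrite !mulnDl; rewrite mulnDl in hr2; lia.
    by rewrite ltn_mul2r => /andP[_]; lia.
  have hub : u*b + b <= t*b.
    have : u.+1*b <= t*b by rewrite leq_mul2r; apply/orP; right; lia.
    by rewrite mulSn addnC.
  have [Q2|Q1] : q = r + 1 \/ q = r by lia.
  + have hua : (u + a)*b <= a*b + t*b - b.
      have : (u + a).+1*b <= (a + t)*b by rewrite leq_mul2r; apply/orP; right; lia.
      rewrite mulSn mulnDl; lia.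
    low3 u a t 0 0 1 q 1 r.
    have [m1 b1] := mkpt (G := G) (j:=0) (z:=0) H hu ltac:(lia) ltac:(clear -hub hrsa hts G2 hs ha hr; nia).
    have [m2 b2] := mkpt (G := G) (j:=1) (z:=q) H hu ltac:(lia) ltac:(clear -hua G1 Q2 h2sa; nia).
    have [m3 b3] := mkpt (G := G) (j:=1) (z:=r) H hu ltac:(lia) ltac:(clear -hua G1 h2sa; nia).
    fin.
  + have hua : (u + a)*b <= (r+1)*t*b - b.
      have : (u + a).+1*b <= ((r+1)*t)*b by rewrite leq_mul2r; apply/orP; right; rewrite Q1 in hq2; lia.
      rewrite mulSn; lia.
    have [r' hr'] : exists r', r = r' + 1 by exists (r - 1); lia.
    subst q r.
    low3 u a t 0 0 1 (r'+1) 1 r'.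
    have [m1 b1] := mkpt (G := G) (j:=0) (z:=0) H hu ltac:(lia) ltac:(clear -hub hrsa hts G2 hs ha hr; nia).
    have [m2 b2] := mkpt (G := G) (j:=1) (z:=r'+1) H hu ltac:(lia) ltac:(clear -hua G2 h2sa; nia).
    have [m3 b3] := mkpt (G := G) (j:=1) (z:=r') H hu ltac:(lia) ltac:(clear -hua G2 h2sa; nia).
    fin.
Qed.

Lemma caseF1 a b c s t r : 0 < a -> 0 < b -> 0 < c -> coprime a b -> c + s*a = t*b ->
  0 < s -> 5*s*a <= t*b -> r*t + 1 <= a -> a <= (r+1)*t -> 2 <= r ->
  s*a <= (a - r*t)*b ->
  is_pFrobenius 2 [:: a; b; c] ((a - r*t - 1)*b + (r+2)*c - a).
Proof.
move=> ha hb hc co H hs hts hr1 hr2 hr hF.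
have ht : 0 < t.
  rewrite lt0n; apply/negP => /eqP t0; move: hts; rewrite t0 mul0n; clear -hs ha; nia.
have [p hp] : exists p, p + r*t + 1 = a by exists (a - r*t - 1); lia.
have hpb : p*b + r*t*b + b = a*b by rewrite -hp !mulnDl mul1n.
have hF' : s*a + r*t*b <= a*b by move: hF; rewrite mulnBl; clear -hr1; nia.
clear hF.
have Hr : (r+2)*c + (r+2)*s*a = (r+2)*t*b by rewrite -!mulnA -mulnDr H.
have [g Eg] : exists g, g = (a - r*t - 1)*b + (r+2)*c - a by eexists.
have Eg' : g + a + (r+2)*s*a + b = a*b + 2*t*b.
  have hca : a <= c by clear -H hts hs; nia.
  rewrite Eg; have -> : a - r*t - 1 = p by lia.
  clear -hpb Hr hca; nia.
rewrite -Eg; clear Eg.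
have [t1 ht1] : exists t1, t1 + 1 = t by exists (t - 1); lia.
have h2t : 2*t <= r*t by rewrite leq_mul2r hr orbT.
apply: (frame (s:=s) (t:=t) (u0 := t + t1) (y1:=t + t1) (z1:=0) (y2:=t1) (z2:=1)) => //.
- lia.
- apply: (modeq (K:=1 + (r+2)*s) (M:=b)); rewrite -ht1 in Eg' *; clear -Eg'; nia.
- move=> y z hm hle.
  have [j hv] := vdecomp hm; have vc := vc_le H hle; clear hm.
  have hcol := colid y z H.
  move: hv vc hcol; set v := y + z*t => hv vc hcol.
  have hzv : z*t <= v by rewrite /v; lia.
  have [j3|] := leqP 2 j.
    have hv4 : 2*a + 2*t <= v + 1 by rewrite hv -ht1; clear -j3; nia.
    have h1' : (2*a + 2*t)*c <= (v+1)*c by rewrite leq_mul2r hv4 orbT.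
    have h2' : t*(g + a + (r+2)*s*a + b) = t*(a*b + 2*t*b) by rewrite Eg'.
    have h3' := leq_mul (leqnn a) hts.
    have h4 : (2*a + 2*t)*(c + s*a) = (2*a + 2*t)*(t*b) by rewrite H.
    clear -h1' h2' h3' h4 vc hs ha H; nia.
  rewrite ltnS leq_eqVlt => /orP [/eqP j1|j0].
  + have z0 : z <= r + 2 by apply: (z_le hzv); rewrite hv j1 -ht1; rewrite -ht1 in hr2; clear -hr2; nia.
    have hz' : z*(s*a) <= (r+2)*(s*a) by rewrite leq_mul2r z0 orbT.
    rewrite hv j1 in hcol.
    have htb : t*b = t1*b + b by rewrite -ht1 mulnDl mul1n.
    clear -hcol hle hz' Eg' ha htb; nia.
  + have jz : j = 0 by lia.
    have z0 : z <= 1 by apply: (z_le hzv); rewrite hv jz -ht1; clear; nia.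
    have [zz|zz] : z = 0 \/ z = 1 by lia.
    * subst z j; rewrite /v in hv; left; clear -hv; nia.
    * subst z j; rewrite /v in hv; right; clear -hv ht1; nia.
- apply: (lowF ha hb H hs hts hr1 hr2 hr).
  + clear -Eg'; nia.
  + have E : (r+2)*t*b = r*t*b + 2*t*b by nia.
    have E2 : (r+2)*s*a = r*s*a + 2*s*a by nia.
    have E3 : (r+1)*s*a = r*s*a + s*a by nia.
    rewrite E E3; rewrite E2 in Eg'; clear -Eg' hF'; lia.
Qed.

Lemma caseF2 a b c s t r : 0 < a -> 0 < b -> 0 < c -> coprime a b -> c + s*a = t*b ->
  0 < s -> 5*s*a <= t*b -> r*t + 1 <= a -> a <= (r+1)*t -> 2 <= r ->
  (a - r*t)*b < s*a ->
  is_pFrobenius 2 [:: a; b; c] ((t - 1)*b + (r+1)*c - a).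
Proof.
move=> ha hb hc co H hs hts hr1 hr2 hr hF.
have ht : 0 < t.
  rewrite lt0n; apply/negP => /eqP t0; move: hts; rewrite t0 mul0n; clear -hs ha; nia.
have hF' : a*b < s*a + r*t*b by move: hF; rewrite mulnBl; clear -hr1; nia.
clear hF.
have hr3 : a + 1 <= (r+1)*t.
  case: (leqP (a+1) ((r+1)*t)) => // hlt.
  have E : a = (r+1)*t by lia.
  have : a*b = r*t*b + t*b by rewrite E; clear; nia.
  clear -hF' hts hs ha; nia.
have Hr : (r+1)*c + (r+1)*s*a = (r+1)*t*b by rewrite -!mulnA -mulnDr H.
have [g Eg] : exists g, g = (t - 1)*b + (r+1)*c - a by eexists.
have Eg' : g + a + (r+1)*s*a + b = (r+2)*t*b.
  have hca : a <= c by clear -H hts hs; nia.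
  rewrite Eg mulnBl; clear -Hr hca ht hb; nia.
rewrite -Eg; clear Eg.
have [w hw] : exists w, w + a + 1 = (r+2)*t by exists ((r+2)*t - a - 1); rewrite mulnDl; rewrite mulnDl in hr3; lia.
have h2t : 2*t <= r*t by rewrite leq_mul2r hr orbT.
have hta : t <= a by clear -hr1 h2t; nia.
apply: (frame (s:=s) (t:=t) (u0 := w) (y1:=w) (z1:=0) (y2:=w - t) (z2:=1)) => //.
- rewrite mulnDl in hw hr3; clear -hw hr3 hr1 h2t; nia.
- apply: (modeq (K:=1 + (r+1)*s) (M:=b)).
  have : w*b + a*b + b = (r+2)*t*b by rewrite -hw !mulnDl mul1n.
  clear -Eg'; nia.
- move=> y z hm hle.
  have [j hv] := vdecomp hm; have vc := vc_le H hle; clear hm.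
  have hcol := colid y z H.
  move: hv vc hcol; set v := y + z*t => hv vc hcol.
  have hzv : z*t <= v by rewrite /v; lia.
  have [j3|] := leqP 2 j.
    have hv4 : a + (r+2)*t <= v + 1 by rewrite hv -hw; clear -j3; nia.
    have h1' : (a + (r+2)*t)*c <= (v+1)*c by rewrite leq_mul2r hv4 orbT.
    have h2' : t*(g + a + (r+1)*s*a + b) = t*((r+2)*t*b) by rewrite Eg'.
    have h3' := leq_mul (leqnn a) hts.
    have h4 : (a + (r+2)*t)*(c + s*a) = (a + (r+2)*t)*(t*b) by rewrite H.
    have h5 : t*(s*a) <= a*(s*a) by rewrite leq_mul2r hta orbT.
    clear -h1' h2' h3' h4 h5 vc hs ha H; nia.
  rewrite ltnS leq_eqVlt => /orP [/eqP j1|j0].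
  + have z0 : z <= r + 1 by apply: (z_le hzv); rewrite hv j1; clear -hw; nia.
    have hz' : z*(s*a) <= (r+1)*(s*a) by rewrite leq_mul2r z0 orbT.
    rewrite hv j1 in hcol.
    have hwb : w*b + a*b + b = (r+2)*t*b by rewrite -hw !mulnDl mul1n.
    clear -hcol hle hz' Eg' ha hwb; nia.
  + have jz : j = 0 by lia.
    have z0 : z <= 1 by apply: (z_le hzv); rewrite hv jz; rewrite !mulnDl in hw hr3; clear -hw hr1 ht; nia.
    have [zz|zz] : z = 0 \/ z = 1 by lia.
    * subst z j; rewrite /v in hv; left; clear -hv; nia.
    * subst z j; rewrite /v in hv; right; clear -hv; nia.
- apply: (lowF ha hb H hs hts hr1 hr2 hr).
  + have E : (r+2)*t*b = r*t*b + 2*t*b by nia.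
    have E2 : (r+2)*s*a = r*s*a + 2*s*a by nia.
    have E3 : (r+1)*s*a = r*s*a + s*a by nia.
    rewrite E2; rewrite E E3 in Eg'; clear -Eg' hF'; lia.
  + clear -Eg'; nia.
Qed.

Lemma caseE : is_pFrobenius 2 [:: 4; 11; 18] 61.
Proof.
apply: (frame (s:=1) (t:=2) (u0:=3) (y1:=3) (z1:=0) (y2:=1) (z2:=1)) => //.
- move=> y z hm hle. have [j hv] := vdecomp hm. clear hm. lia.
- move=> u hu; case: u hu => [|[|[|[|u]]]] hu //.
  + exists 0, 0, 2, 1, 0, 2; do !split; by [].
  + exists 1, 0, 3, 1, 1, 2; do !split; by [].
  + exists 2, 0, 0, 1, 0, 3; do !split; by [].
  + exists 3, 0, 1, 1, 1, 3; do !split; by [].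
Qed.

Lemma luc_pos n : 0 < lucas n.
Proof. elim: n {-2}n (leqnn n) => [|m IH] [|[|n]] hn //; rewrite lucSS; have := IH n.+1; lia. Qed.

Lemma vals m : let P := fib m.+1 in let Q := fib m in
  [/\ fib m.+2 = P + Q, fib m.+3 = 2*P + Q, fib m.+4 = 3*P + 2*Q, fib m.+4.+1 = 5*P + 3*Q &
  [/\ fib m.+4.+2 = 8*P + 5*Q, fib m.+4.+3 = 13*P + 8*Q, lucas m.+3 = 4*P + 3*Q &
      lucas (m.+3 + 2) = 11*P + 7*Q]].
Proof.
move=> P Q.
have e2 : fib m.+2 = P + Q by rewrite fibSS.
have e3 : fib m.+3 = 2*P + Q by rewrite fibSS e2; lia.
have e4 : fib m.+4 = 3*P + 2*Q by rewrite fibSS e3 e2; lia.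
have e5 : fib m.+4.+1 = 5*P + 3*Q by rewrite fibSS e4 e3; lia.
have e6 : fib m.+4.+2 = 8*P + 5*Q by rewrite fibSS e5 e4; lia.
have e7 : fib m.+4.+3 = 13*P + 8*Q by rewrite fibSS e6 e5; lia.
split=> //; split=> //.
- by rewrite luc_fib e4 e2; lia.
- by rewrite addn2 luc_fib e6 e4; lia.
Qed.

Lemma setup m k' : 1 <= k' ->
  [/\ 0 < lucas m.+3, 0 < lucas (m.+3 + 2), 0 < lucas (m.+3 + k'.+2), coprime (lucas m.+3) (lucas (m.+3 + 2)) &
   [/\ lucas (m.+3 + k'.+2) + fib k' * lucas m.+3 = fib k'.+2 * lucas (m.+3 + 2), 0 < fib k' &
       5 * fib k' * lucas m.+3 <= fib k'.+2 * lucas (m.+3+2)]].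
Proof.
move=> hk.
have [_ _ _ _ [_ _ ha hb]] := vals m.
split; try exact: luc_pos; first exact: luc_coprime.
split; first exact: key_id.
- by case: k' hk => // k' _; exact: fib_pos.
- have ht : 2 * fib k' <= fib k'.+2 by rewrite fibSS; have := fib_leS k'; lia.
  have hPQ := fib_leS m.
  have h5 : 5 * lucas m.+3 <= 2 * lucas (m.+3 + 2) by rewrite ha hb; lia.
  have := leq_mul ht h5.
  nia.
Qed.

Theorem theorem7 (i k : nat) (hi : 3 <= i) (hk : 3 <= k) :
  let L := lucas in
  let F := fib in
  let g2 := is_pFrobenius 2 in
  (* (a) *)
  (i + 4 <= k ->
     g2 [:: L i; L (i + 2); L (i + k)] ((3 * L i - 1) * L (i + 2) - L i)) /\
  (* (b) *)
  g2 [:: L i; L (i + 2); L (2 * i + 3)]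
     ((L i - 1) * L (i + 2) + L (2 * i + 3) - L i) /\
  (* (c) *)
  (odd i ->
     g2 [:: L i; L (i + 2); L (2 * i + 2)]
        ((L i - 1) * L (i + 2) + L (2 * i + 2) - L i)) /\
  (~~ odd i ->
     g2 [:: L i; L (i + 2); L (2 * i + 2)]
        ((2 * L i - 1) * L (i + 2) - L i)) /\
  (* (d) *)
  g2 [:: L i; L (i + 2); L (2 * i + 1)]
     ((2 * F (i - 1) - 1) * L (i + 2) + 2 * L (2 * i + 1) - L i) /\
  (* (e) *)
  (L 5 + 3 * L 6 - L 3 = 61 /\ g2 [:: L 3; L 5; L 6] 61) /\
  (* (f) *)
  (let r := (L i - 1) %/ F k in
   (2 <= r <-> (k <= i /\ (i, k) <> (3, 3))) /\
   (2 <= r ->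
      (F (k - 2) * L i <= (L i - r * F k) * L (i + 2) ->
         g2 [:: L i; L (i + 2); L (i + k)]
            ((L i - r * F k - 1) * L (i + 2) + (r + 2) * L (i + k) - L i)) /\
      ((L i - r * F k) * L (i + 2) < F (k - 2) * L i ->
         g2 [:: L i; L (i + 2); L (i + k)]
            ((F k - 1) * L (i + 2) + (r + 1) * L (i + k) - L i)))).
Proof.
cbv zeta.
have [m Hm] : exists m, i = m.+3 by exists (i - 3); lia.
subst i.
have [k' Hk] : exists k', k = k'.+2 by exists (k - 2); lia.
subst k.
have hk' : 1 <= k' by lia.
have [eF2 eF3 eF4 eF5 [eF6 eF7 ea eb]] := vals m.
have hPQ : fib m <= fib m.+1 := fib_leS m.
have hP : 0 < fib m.+1 := fib_pos m.
split; [|split; [|split; [|split; [|split; [|split]]]]].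
-
  move=> h4.
  have [ha hb hc co [H hs hts]] := setup m hk'.
  apply: (caseA (s:=fib k') (t:=fib k'.+2)) => //.
  have : fib m.+4.+3 <= fib k'.+2 by apply: fib_mono; lia.
  rewrite ea eF7; lia.
-
  rewrite (_ : 2 * m.+3 + 3 = m.+3 + m.+4.+2); last lia.
  have [ha hb hc co [H hs hts]] := setup m (k':=m.+4) ltac:(lia).
  move: ha hb hc co H hs hts.
  set a := lucas m.+3; set b := lucas (m.+3 + 2); set c := lucas _; set s := fib m.+4; set t := fib m.+4.+2.
  move=> ha hb hc co H hs hts.
  have ea' : a = 4 * fib m.+1 + 3 * fib m := ea.
  have eb' : b = 11 * fib m.+1 + 7 * fib m := eb.
  have es' : s = 3 * fib m.+1 + 2 * fib m := eF4.
  have et' : t = 8 * fib m.+1 + 5 * fib m := eF6.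
  clearbody a b c s t.
  have -> : (a - 1)*b + c - a = (a + t - 1)*b - s*a - a.
    rewrite !mulnBl !mulnDl; have : b <= a*b by rewrite leq_pmull.
    clear -H; lia.
  apply: (caseBC1 (s:=s) (t:=t)) => //.
  + rewrite ea' et'; lia.
  + rewrite ea' et'; lia.
  + rewrite ea' et' es' eb' (_ : 8 * fib m.+1 + 5 * fib m - (4 * fib m.+1 + 3 * fib m) = 4 * fib m.+1 + 2 * fib m); last lia.
    clear -hP hPQ; nia.
-
  move=> hodd.
  rewrite (_ : 2 * m.+3 + 2 = m.+3 + m.+3.+2); last lia.
  have [ha hb hc co [H hs hts]] := setup m (k':=m.+3) ltac:(lia).
  have cas := cassini m.
  have hm : odd m = false by move: hodd; rewrite /=; case: (odd m).
  rewrite hm in cas.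
  move: ha hb hc co H hs hts.
  set a := lucas m.+3; set b := lucas (m.+3 + 2); set c := lucas _; set s := fib m.+3; set t := fib m.+4.+1.
  move=> ha hb hc co H hs hts.
  have ea' : a = 4 * fib m.+1 + 3 * fib m := ea.
  have eb' : b = 11 * fib m.+1 + 7 * fib m := eb.
  have es' : s = 2 * fib m.+1 + fib m := eF3.
  have et' : t = 5 * fib m.+1 + 3 * fib m := eF5.
  clearbody a b c s t.
  have -> : (a - 1)*b + c - a = (a + t - 1)*b - s*a - a.
    rewrite !mulnBl !mulnDl; have : b <= a*b by rewrite leq_pmull.
    clear -H; lia.
  apply: (caseBC1 (s:=s) (t:=t)) => //.
  + rewrite ea' et'; lia.
  + rewrite ea' et'; lia.
  + rewrite ea' et' es' eb' (_ : 5 * fib m.+1 + 3 * fib m - (4 * fib m.+1 + 3 * fib m) = fib m.+1); last lia.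
    clear -cas; nia.
-
  move=> hev.
  rewrite (_ : 2 * m.+3 + 2 = m.+3 + m.+3.+2); last lia.
  have [ha hb hc co [H hs hts]] := setup m (k':=m.+3) ltac:(lia).
  have cas := cassini m.
  have hm : odd m = true by move: hev; rewrite /=; case: (odd m).
  rewrite hm in cas.
  move: ha hb hc co H hs hts.
  set a := lucas m.+3; set b := lucas (m.+3 + 2); set c := lucas _; set s := fib m.+3; set t := fib m.+4.+1.
  move=> ha hb hc co H hs hts.
  have ea' : a = 4 * fib m.+1 + 3 * fib m := ea.
  have eb' : b = 11 * fib m.+1 + 7 * fib m := eb.
  have es' : s = 2 * fib m.+1 + fib m := eF3.
  have et' : t = 5 * fib m.+1 + 3 * fib m := eF5.
  clearbody a b c s t.
  apply: (caseBC2 (s:=s) (t:=t)) => //.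
  + rewrite ea' et'; lia.
  + rewrite ea' et'; lia.
  + rewrite ea' et' es' eb' (_ : 5 * fib m.+1 + 3 * fib m - (4 * fib m.+1 + 3 * fib m) = fib m.+1); last lia.
    clear -cas; nia.
-
  rewrite (_ : 2 * m.+3 + 1 = m.+3 + m.+2.+2); last lia.
  rewrite (_ : m.+3 - 1 = m.+2); last lia.
  have [ha hb hc co [H hs hts]] := setup m (k':=m.+2) ltac:(lia).
  move: ha hb hc co H hs hts.
  set a := lucas m.+3; set b := lucas (m.+3 + 2); set c := lucas _; set s := fib m.+2; set t := fib m.+4.
  move=> ha hb hc co H hs hts.
  have ea' : a = 4 * fib m.+1 + 3 * fib m := ea.
  have eb' : b = 11 * fib m.+1 + 7 * fib m := eb.
  have es' : s = fib m.+1 + fib m := eF2.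
  have et' : t = 3 * fib m.+1 + 2 * fib m := eF4.
  clearbody a b c s t.
  have hat : a = s + t by rewrite ea' es' et'; lia.
  have -> : (2 * s - 1)*b + 2 * c - a = (2*a - 1)*b - 2*s*a - a.
    rewrite hat !mulnBl !mulnDl -hat; have : b <= s*b by rewrite leq_pmull.
    have E2 : 2*c + 2*s*a = 2*t*b by rewrite -!mulnA -mulnDr H.
    clear -E2; lia.
  apply: (caseD (s:=s) (t:=t)) => //.
  + rewrite ea' et'; lia.
  + rewrite ea' et'; lia.
  + rewrite ea' et' es' eb' (_ : 4 * fib m.+1 + 3 * fib m - (3 * fib m.+1 + 2 * fib m) = fib m.+1 + fib m); last lia.
    clear -hP hPQ; nia.
-
  split; first by [].
  exact: caseE.
-
  rewrite (_ : k'.+2 - 2 = k'); last lia.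
  have [ha hb hc co [H hs hts]] := setup m hk'.
  have ht : 0 < fib k'.+2 by exact: fib_pos.
  move: ha hb hc co H hs hts ht.
  set a := lucas m.+3; set b := lucas (m.+3 + 2); set c := lucas _; set s := fib k'; set t := fib k'.+2.
  move=> ha hb hc co H hs hts ht.
  have hrr : (a - 1) = (a - 1) %/ t * t + (a - 1) %% t := divn_eq _ _.
  have hmod : (a - 1) %% t < t := ltn_pmod _ ht.
  move: hrr hmod; set r := (a - 1) %/ t; set q := (a - 1) %% t => hrr hmod.
  have hr1 : r * t + 1 <= a by lia.
  have hr2 : a <= (r + 1) * t by rewrite mulnDl mul1n; lia.
  split.
  + rewrite /r leq_divRL //.
    split.
    * move=> h; split.
      - rewrite leqNgt; apply/negP => hlt.
        have : fib m.+4 <= t by apply: fib_mono; lia.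
        move: h; rewrite /a ea eF4; lia.
      - move=> [E1 E2].
        have hm0 : m = 0 by lia.
        have hk1 : k' = 1 by lia.
        subst m k'.
        by move: h; rewrite /a /t.
    * case=> hle hne.
      have [hkm|hkm] : k' <= m \/ k' = m.+1 by lia.
      - have : t <= fib m.+2 by apply: fib_mono; lia.
        rewrite /a ea eF2; lia.
      - have hm1 : 0 < m.
          rewrite lt0n; apply/negP => /eqP m0; apply: hne; by rewrite hkm m0.
        have hQ : 0 < fib m by have := fib_pos m.-1; rewrite prednK.
        rewrite /a /t hkm ea eF3; lia.
  + move=> hr; split.
    * move=> hF; exact: (caseF1 (s:=s) (t:=t)).
    * move=> hF; exact: (caseF2 (s:=s) (t:=t)).
Qed.
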